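(* Let $R=k[x_1,\dots,x_m]$ be a polynomial ring over a field $k$, let $I$ be a monomial ideal and $J\subseteq R$ an ideal, and let $I:\langle J\rangle=\bigcup_{r\ge0}(I:J^r)$. Let $f$ and $f'$ be the least common multiples of the minimal generating monomials of $I$ and of $I:\langle J\rangle$, respectively. Then $f'$ divides $f$. *)

(* Defs.v *)
From mathcomp Require Import all_boot all_algebra.
From mathcomp Require Export mpoly.
Set Implicit Arguments. Unset Strict Implicit. Unset Printing Implicit Defensive.
Import GRing.Theory.
Local Open Scope ring_scope.

Section Ideals.
Variables (k : fieldType) (m : nat).
Local Notation R := {mpoly k[m]}.

Definition is_ideal (I : R -> Prop) : Prop :=
  [/\ I 0, (forall p q, I p -> I q -> I (p + q)) & (forall a p, I p -> I (a * p))].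

Definition ideal_gen (S : R -> Prop) (p : R) : Prop :=
  exists (n : nat) (c : 'I_n -> R) (g : 'I_n -> R),
    (forall i, S (g i)) /\ p = \sum_(i < n) c i * g i.

Definition monomial_ideal (I : R -> Prop) : Prop :=
  is_ideal I /\
  exists E : 'X_{1..m} -> Prop,
    forall p, I p <-> ideal_gen (fun g => exists e, E e /\ g = 'X_[e]) p.

(* The r-th power J^r of an ideal: generated by products of r elements of J
   (J^0 = R, generated by the empty product 1). *)
Definition pow_ideal (J : R -> Prop) (r : nat) : R -> Prop :=
  ideal_gen (fun g => exists j : 'I_r -> R,
                (forall i, J (j i)) /\ g = \prod_(i < r) j i).

Definition colon (I K : R -> Prop) (p : R) : Prop :=
  forall q, K q -> I (p * q).

Definition saturation (I J : R -> Prop) (p : R) : Prop :=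
  exists r : nat, colon I (pow_ideal J r) p.

Definition min_gen_monomial (I : R -> Prop) (e : 'X_{1..m}) : Prop :=
  I 'X_[e] /\ forall e' : 'X_{1..m}, I 'X_[e'] -> (e' <= e)%MM -> e' = e.

Definition lcm_monomials (G : seq 'X_{1..m}) : R :=
  'X_[ [multinom \max_(e <- G) e i | i < m] ].

Definition mdivides (a b : R) : Prop := exists q : R, b = q * a.

End Ideals.

(* Main.v *)
Require Import Defs.
From mathcomp Require Import all_boot all_algebra.
From mathcomp Require Import mpoly.
From mathcomp Require Import zify.
From Stdlib Require Import Classical.
Set Implicit Arguments. Unset Strict Implicit.
Import GRing.Theory.
Local Open Scope ring_scope.

Section Aux.
Variables (k : fieldType) (m : nat).
Local Notation R := {mpoly k[m]}.

Lemma ideal_sum (I : R -> Prop) (T : eqType) (r : seq T) (F : T -> R) :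
  is_ideal I -> (forall x, x \in r -> I (F x)) -> I (\sum_(x <- r) F x).
Proof.
case=> I0 ID _; elim: r => [|x r IH] H; first by rewrite big_nil.
rewrite big_cons; apply: ID; first by apply: H; rewrite inE eqxx.
by apply: IH => y Hy; apply: H; rewrite inE Hy orbT.
Qed.

Lemma gen_in (I : R -> Prop) (E : 'X_{1..m} -> Prop) :
  (forall p, I p <-> ideal_gen (fun g => exists e, E e /\ g = 'X_[e]) p) ->
  forall e, E e -> I 'X_[e].
Proof.
move=> HI e Ee; apply/HI; exists 1%N, (fun _ => 1), (fun _ => 'X_[e]); split.
  by move=> _; exists e.
by rewrite big_ord1 mul1r.
Qed.

Lemma coef_in (I : R -> Prop) p a :
  monomial_ideal I -> I p -> p@_a != 0 -> I 'X_[a].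
Proof.
case=> [[I0 ID IM] [E HE]] Ip.
have [n [c [g [Hg ->]]]] := (proj1 (HE p) Ip).
rewrite raddf_sum /=.
case: (pickP (fun i => (c i * g i)@_a != 0)) => [i Hi | H]; last first.
  by rewrite big1 ?eqxx // => i _; move/negbFE: (H i) => /eqP.
move=> _.
have [e [Ee ge]] := Hg i.
move: Hi; rewrite ge -mcoeff_msupp (perm_mem (msuppMX _ _)).
case/mapP => m' _ ->.
rewrite mpolyXD mulrC; apply: (IM); exact: (gen_in HE Ee).
Qed.

Lemma min_exists (I : R -> Prop) a : I 'X_[a] ->
  exists g, min_gen_monomial I g /\ (g <= a)%MM.
Proof.
have H: forall n a, (mdeg a < n)%N -> I 'X_[a] ->
  exists g, min_gen_monomial I g /\ (g <= a)%MM; last first.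
  by apply: (H (mdeg a).+1).
elim=> [|n IH] {}a //= Ha Ia.
case: (classic (forall e', I 'X_[e'] -> (e' <= a)%MM -> e' = a)) => Hc.
  by exists a; split; [split|apply: lepm_refl].
have [e' He'] := not_all_ex_not _ _ Hc.
have [Ie' He2] := imply_to_and _ _ He'.
have [le neq] := imply_to_and _ _ He2.
have Hd: mdeg a = (mdeg (a - e') + mdeg e')%N by rewrite -mdegD submK.
have Hnz: mdeg (a - e') != 0%N.
  rewrite mdeg_eq0; apply/eqP => h; apply: neq.
  by have := submK le; rewrite h add0m.
have [g [Hg gle]] := IH e' ltac:(lia) Ie'.
by exists g; split => //; apply: lepm_trans gle le.
Qed.

End Aux.

Theorem lemma2p8 (k : fieldType) (m : nat) (I J : {mpoly k[m]} -> Prop)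
  (G G' : seq 'X_{1..m}) :
  monomial_ideal I -> is_ideal J ->
  (forall e, e \in G <-> min_gen_monomial I e) ->
  (forall e, e \in G' <-> min_gen_monomial (saturation I J) e) ->
  mdivides (lcm_monomials k G') (lcm_monomials k G).
Proof.
move=> HI HJ HG HG'.
have [[I0 ID IM] _] := HI.
rewrite /lcm_monomials.
set F := [multinom \max_(e <- G) e i | i < m].
set F' := [multinom \max_(e <- G') e i | i < m].
have key: forall e, e \in G' -> forall i, (e i <= F i)%N.
  move=> e /HG' [[r Hr] Hmin] i; rewrite leqNgt; apply/negP => Hlt.
  set e' := (e - U_(i))%MM.
  have Se': saturation I J 'X_[e'].
    exists r => q Hq; have Ieq := Hr q Hq.
    rewrite (mpolyE q) mulr_sumr; apply: ideal_sum => // b Hb.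
    rewrite -mul_mpolyC mulrCA; apply: (IM); rewrite -mpolyXD.
    have Ieb : I 'X_[e + b].
      apply: (coef_in HI Ieq); rewrite mulrC mcoeffMX -mcoeff_msupp //.
    have [g [Hg gle]] := min_exists Ieb.
    have gG : g \in G by apply/HG.
    have gF : (g i <= F i)%N by rewrite mnmE; apply: (leq_bigmax_seq g).
    have gle' : (g <= e' + b)%MM.
      apply/mnm_lepP => j; have := mnm_lepP gle j.
      rewrite !mnmDE mnmBE mnm1E.
      case: (eqVneq i j) => [<-|_] /=; last by rewrite subn0.
      lia.
    rewrite -(submK gle') mpolyXD; apply: (IM); exact: Hg.1.
  have := Hmin e' Se' (lem_subr _ _) => /(congr1 (fun x : 'X_{1..m} => x i)).
  rewrite mnmBE mnm1E eqxx; lia.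
have le: (F' <= F)%MM.
  apply/mnm_lepP => i; rewrite mnmE; apply/bigmax_leqP_seq => e He _.
  exact: key.
by exists 'X_[F - F']; rewrite -mpolyXD submK.
Qed.
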